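(* Call a butterfly partition of $n$ a partition of $n$ into distinct parts $p_1>p_2>\dots>p_k$ with $k\ge 3$, $p_1=p_2+1=p_3+2$ and $p_k\ge 2$. For $n\ge 6$ let $s_e(n)$ (resp. $s_o(n)$) be the number of butterfly partitions of $n$ whose second largest part $p_2$ is even (resp. odd). For an integer $t$ put $P_1(t)=\tfrac12(3t^2+t+4)$, $P_2(t)=\tfrac12(3(t+1)^2-t-1)$, $P_3(t)=\tfrac12(3(t+1)^2-t+3)$, $P_4(t)=\tfrac12(3(t+1)^2+t+1)$. Then for every integer $n\ge 6$: (a) $s_e(n)=s_o(n)$ if $n\notin\{P_1(t),P_2(t),P_3(t),P_4(t)\}$ for every integer $t\ge 2$; (b) $s_e(n)=s_o(n)-1$ if $n=P_1(t)$ or $n=P_4(t)$ for some integer $t\ge 2$; (c) $s_e(n)=s_o(n)+1$ if $n=P_2(t)$ or $n=P_3(t)$ for some integer $t\ge 2$. *)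

(* Defs.v *)
From mathcomp Require Import all_boot.
Set Implicit Arguments. Unset Strict Implicit. Unset Printing Implicit Defensive.

(* A partition of n into distinct parts p_1 > p_2 > ... > p_k is represented
   by the strictly decreasing list [:: p_1; ...; p_k] of positive naturals
   summing to n. *)
Definition distinct_partition (n : nat) (s : seq nat) : bool :=
  sorted gtn s && all (fun p => 0 < p) s && (sumn s == n).

Definition butterfly (n : nat) (s : seq nat) : bool :=
  [&& distinct_partition n s, 3 <= size s,
      nth 0 s 0 == (nth 0 s 1).+1,
      nth 0 s 0 == (nth 0 s 2).+2
    & 2 <= last 0 s].

(* All partitions of n into distinct parts: every such partition has its parts
   in {1,...,n}, so it is the decreasing enumeration of a subset of 'I_n.+1.
   We list the decreasing enumerations of all subsets of 'I_n.+1 and keep the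
   distinct partitions of n; this list has no duplicates. *)
Definition distinct_partitions (n : nat) : seq (seq nat) :=
  [seq s <- [seq sort geq [seq val i | i <- enum A] | A : {set 'I_n.+1}]
     | distinct_partition n s].

Definition butterflies (n : nat) : seq (seq nat) :=
  [seq s <- distinct_partitions n | butterfly n s].

Definition s_e (n : nat) : nat := count (fun s => ~~ odd (nth 0 s 1)) (butterflies n).
Definition s_o (n : nat) : nat := count (fun s => odd (nth 0 s 1)) (butterflies n).

(* The four quadratic polynomials (values are integers; divisions are exact). *)
Definition P1 (t : nat) : nat := (3 * t ^ 2 + t + 4) %/ 2.
Definition P2 (t : nat) : nat := (3 * (t + 1) ^ 2 - t - 1) %/ 2.
Definition P3 (t : nat) : nat := (3 * (t + 1) ^ 2 - t + 3) %/ 2.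
Definition P4 (t : nat) : nat := (3 * (t + 1) ^ 2 + t + 1) %/ 2.

(* Main.v *)
Require Import Defs.
From mathcomp Require Import all_boot zify.
Set Implicit Arguments. Unset Strict Implicit. Unset Printing Implicit Defensive.

Fixpoint stair (a r : nat) : seq nat := if r is r'.+1 then (a + r') :: stair a r' else [::].

Fixpoint run (l : seq nat) : nat :=
  match l with
  | x :: l' => if l' is y :: _ then (if x == y.+1 then (run l').+1 else 1) else 1
  | [::] => 0
  end.

Lemma size_stair a r : size (stair a r) = r.
Proof. by elim: r => //= r ->. Qed.

Lemma stair_cat a m k : stair a (m + k) = stair (a + k) m ++ stair a k.
Proof. elim: m => //= m ->; congr (_ :: _); lia. Qed.

Lemma take_stair a r k : k <= r -> take k (stair a r) = stair (a + (r - k)) k.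
Proof.
move=> kr; have -> : r = k + (r - k) by lia.
by rewrite stair_cat take_size_cat ?size_stair // addKn.
Qed.

Lemma drop_stair a r k : k <= r -> drop k (stair a r) = stair a (r - k).
Proof.
move=> kr; have -> : r = k + (r - k) by lia.
by rewrite stair_cat drop_size_cat ?size_stair // addKn.
Qed.

Lemma map_succ_stair a r : map succn (stair a r) = stair a.+1 r.
Proof. by elim: r => //= r ->; rewrite addSn. Qed.

Lemma map_pred_stair a r : 0 < a -> map predn (stair a r) = stair a.-1 r.
Proof. move=> a0; elim: r => //= r ->; congr (_ :: _); lia. Qed.

Lemma sumn_stair a r : 2 * sumn (stair a r) + r = r * (2 * a + r).
Proof. elim: r => //= r IH; nia. Qed.

Lemma sumn_stairS a r : sumn (stair a.+1 r) = sumn (stair a r) + r.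
Proof. elim: r => //= r ->; lia. Qed.

Lemma last_stair x a r : last x (stair a r.+1) = a.
Proof. elim: r x => [|r IH] x /=; [by rewrite addn0 | exact: IH]. Qed.

Lemma all_stair (p : pred nat) a r : (forall k, k < r -> p (a + k)) -> all p (stair a r).
Proof. elim: r => //= r IH H; rewrite H // IH // => k kr; apply: H; lia. Qed.

Lemma stairS a r : stair a r.+1 = (a + r) :: stair a r.
Proof. by []. Qed.

Lemma run_cons2 x y l : run (x :: y :: l) = if x == y.+1 then (run (y :: l)).+1 else 1.
Proof. by []. Qed.

Lemma run_cons x l : 0 < run (x :: l).
Proof. by case: l => //= y l; case: ifP. Qed.

Lemma run_stair_ge a r rest : 0 < r -> r <= run (stair a r ++ rest).
Proof.
elim: r => // r IH _; case: r IH => [|r] IH; first exact: run_cons.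
rewrite !stairS !cat_cons.
rewrite run_cons2 addnS eqxx ltnS -cat_cons -stairS; exact: IH.
Qed.

Lemma run_stair_eq a r rest : 0 < r -> (rest = [::] \/ (head 0 rest).+1 != a) ->
  run (stair a r ++ rest) = r.
Proof.
move=> + H; elim: r => // r IH _; case: r IH => [|r] IH.
  clear IH; rewrite /= addn0; case: H => [->|] //; case: rest => //= y l.
  by rewrite eq_sym => /negbTE ->.
rewrite !stairS !cat_cons.
by rewrite run_cons2 addnS eqxx -cat_cons -stairS IH.
Qed.

Lemma run_decomp l : l != [::] ->
  exists a rest, l = stair a (run l) ++ rest /\ (rest = [::] \/ (head 0 rest).+1 != a).
Proof.
elim: l => // x l IH _; case: l IH => [|y l] IH.
  by exists x, [::]; rewrite /= addn0; split => //; left.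
rewrite run_cons2; case: ifP => [/eqP xy|xy].
  have [a [rest [E H]]] := IH isT.
  exists a, rest; split => //.
  have r0 := run_cons y l.
  move: E; case: (run (y :: l)) r0 => [|r] // _ E.
  rewrite stairS cat_cons -E xy; congr (_ :: _).
  move: E; rewrite stairS cat_cons => -[-> _]; lia.
exists x, (y :: l); rewrite /= addn0; split => //; right; by rewrite eq_sym xy.
Qed.

Lemma sorted_stair_cat a r rest : 0 < r ->
  sorted gtn (stair a r ++ rest) = sorted gtn rest && (if rest is y :: _ then y < a else true).
Proof.
elim: r => // r IH _; case: r IH => [|r] IH.
  clear IH; rewrite /= addn0; case: rest => //= y l; by rewrite andbC.
rewrite !stairS !cat_cons /= -IH // stairS cat_cons /=.
by rewrite addnS ltnSn.
Qed.

Lemma gtn_trans : transitive gtn.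
Proof. move=> y x z /= h1 h2; exact: ltn_trans h2 h1. Qed.

Lemma pw_stair a r : pairwise gtn (stair a r).
Proof.
elim: r => //= r ->; rewrite andbT; apply: all_stair => k kr /=; lia.
Qed.

Lemma allrel_stair a r rest : 0 < r -> allrel gtn (stair a r) rest = all (fun y => y < a) rest.
Proof.
elim: r => // [[|r]] IH _.
  by rewrite /= addn0 allrel_consl allrel0l andbT.
rewrite stairS allrel_consl IH //; apply/idP/idP => [/andP[_ ->] //|H].
rewrite H andbT; apply: sub_all H => y /= ya; lia.
Qed.

Lemma pw_stair_cat a r rest : 0 < r ->
  pairwise gtn (stair a r ++ rest) = pairwise gtn rest && all (fun y => y < a) rest.
Proof. by move=> r0; rewrite pairwise_cat allrel_stair // pw_stair /= andbC. Qed.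

Definition isE (l : seq nat) :=
  (run l == size l) && ((last 0 l == run l) || (last 0 l == (run l).+1)).

Definition F (l : seq nat) : seq nat :=
  let r := run l in let s := last 0 l in
  if s <= r then let l0 := take (size l).-1 l in map succn (take s l0) ++ drop s l0
  else map predn (take r l) ++ drop r l ++ [:: r].

Definition Good (l : seq nat) := [&& pairwise gtn l, all (leq 3) l & 3 <= run l].

Definition cond c s (m : seq nat) :=
  [&& 3 <= s, s < c, pairwise gtn m, all (fun x => s < x) m & all (fun x => x < c) m].

Definition U c s m := stair c s ++ m ++ [:: s].
Definition D c s m := stair c.+1 s ++ m.

Lemma last_gt s (l : seq nat) : l != [::] -> all (fun x => s < x) l -> s < last 0 l.
Proof.
case: l => // x l _ /allP H; apply: H; exact: mem_last.
Qed.

Lemma F_U c s m : cond c s m -> F (U c s m) = D c s m.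
Proof.
case/and5P => s3 sc pm am hm.
rewrite /F /U last_cat /= last_cat /=.
have -> : s <= run (stair c s ++ m ++ [:: s]) by apply: run_stair_ge; lia.
rewrite catA size_cat /= addn1 /= take_size_cat; last by rewrite size_cat size_stair.
rewrite take_size_cat ?size_stair // drop_size_cat ?size_stair //.
by rewrite map_succ_stair.
Qed.

Lemma run_D c s m : cond c s m -> run (D c s m) = s.
Proof.
case/and5P => s3 sc pm am hm; rewrite /D run_stair_eq //; first lia.
by case: m pm am hm => [|y m] _ _ /= hm; [left|right; rewrite eqSS; apply/eqP => E; move: hm; lia].
Qed.

Lemma last_D c s m : cond c s m -> s < last 0 (D c s m).
Proof.
move=> C; move: (C); case/and5P => s3 sc pm am hm; apply: last_gt.
  by rewrite /D; case: s s3 {sc am C} => // s.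
rewrite /D all_cat am andbT; apply: all_stair => k _; lia.
Qed.

Lemma F_D c s m : cond c s m -> F (D c s m) = U c s m.
Proof.
move=> C; rewrite /F run_D // leqNgt last_D //=.
move: C; case/and5P => s3 sc pm am hm.
rewrite /D take_size_cat ?size_stair // drop_size_cat ?size_stair //.
by rewrite map_pred_stair.
Qed.

Lemma Good_U c s m : cond c s m -> Good (U c s m).
Proof.
case/and5P => s3 sc pm am hm; apply/and3P; split.
- rewrite /U pw_stair_cat; last lia.
  rewrite pairwise_cat pm allrel1r /= andbT all_cat /= hm sc /= andbT.
  by apply: sub_all am => x.
- rewrite /U all_cat all_cat /= andbT; apply/and3P; split => //.
    apply: all_stair => k _; lia.
  by apply: sub_all am => x /=; lia.
- rewrite /U; have := @run_stair_ge c s (m ++ [:: s]); lia.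
Qed.

Lemma Good_D c s m : cond c s m -> Good (D c s m).
Proof.
move=> C; rewrite /Good run_D //; move: C; case/and5P => s3 sc pm am hm.
rewrite s3 andbT /D pw_stair_cat; last lia.
rewrite pm /= all_cat; apply/and3P; split.
- by apply: sub_all hm => x /=; lia.
- apply: all_stair => k _; lia.
- by apply: sub_all am => x /=; lia.
Qed.

Lemma last_U c s m : last 0 (U c s m) = s.
Proof. by rewrite /U !last_cat. Qed.

Lemma notE_U c s m : cond c s m -> ~~ isE (U c s m).
Proof.
case/and5P => s3 sc pm am hm; rewrite /isE last_U.
apply/negP => /andP [/eqP -> ]; rewrite /U !size_cat size_stair /=.
case/orP => /eqP; lia.
Qed.

Lemma notE_D c s m : cond c s m -> ~~ isE (D c s m).
Proof.
move=> C; rewrite /isE run_D //; move: C; case/and5P => s3 sc pm am hm.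
apply/negP => /andP [/eqP]; rewrite /D size_cat size_stair.
case: m {pm am hm} => [|y m] /=; last lia.
move=> _; case: s s3 sc => // s _ sc; rewrite cats0 last_stair.
case/orP => /eqP; lia.
Qed.

Lemma sum_U c s m : sumn (U c s m) = sumn (D c s m).
Proof. rewrite /U /D !sumn_cat sumn_stairS /=; lia. Qed.

Lemma nth1_stair a r rest : nth 0 (stair a r.+2 ++ rest) 1 = a + r.
Proof. by []. Qed.

Lemma mem_stair_bot a r : 0 < r -> a \in stair a r.
Proof. elim: r => // [[|r]] IH _; first by rewrite /= addn0 mem_seq1. by rewrite stairS in_cons IH ?orbT. Qed.

Lemma pw_stair_cat' a k rest : pairwise gtn rest -> all (fun y => y < a) rest ->
  pairwise gtn (stair a k ++ rest).
Proof.
case: k => [|k] p al; first by [].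
by rewrite pw_stair_cat // p al.
Qed.

Lemma all_le_head (rest : seq nat) : pairwise gtn rest -> all (fun x => x <= head 0 rest) rest.
Proof.
case: rest => // h t; rewrite pairwise_cons => /andP [a _]; rewrite /= leqnn /=.
by apply: sub_all a => x /= /ltnW.
Qed.

Lemma stair_split a m k : stair a (m + k).+1 = stair (a + k).+1 m ++ stair a.+1 k ++ [:: a].
Proof.
by rewrite -addn1 stair_cat stair_cat /= addn0 -catA addn1 addSn.
Qed.

Lemma classify l : Good l -> ~~ isE l -> exists c s m, cond c s m /\ (l = U c s m \/ l = D c s m).
Proof.
case/and3P => pl al rl nE.
have l0 : l != [::] by case: l rl {pl al nE}.
have [a [rest [E H]]] := run_decomp l0.
move: E H rl; set r := run l => E H rl.
have r0 : 0 < r by lia.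
have hr : run (stair a r ++ rest) = r by apply: run_stair_eq.
rewrite E in pl al nE *; clearbody r; clear E l0 l.
rewrite /isE hr in nE.
have a3 : 3 <= a.
  by move: al; rewrite all_cat => /andP [/allP /(_ _ (mem_stair_bot a r0))].
rewrite pw_stair_cat // in pl; case/andP: pl => pr ar.
rewrite all_cat in al; case/andP: al => _ al.
case/lastP: rest H pr ar al nE hr => [|rest' s'] H pr ar al nE hr.
  rewrite cats0 size_stair eqxx /= in nE *.
  case: r r0 rl nE {hr H} => // r' _ rl; rewrite last_stair.
  case: (ltnP a r'.+1) => ar' nE.
    exists r'.+1, a, (stair a.+1 (r' - a)); split.
      apply/and5P; split => //.
      - exact: pw_stair.
      - apply: all_stair => k _ /=; lia.
      - apply: all_stair => k kr /=; lia.
    left; rewrite /U.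
    have -> : r' = (a + (r' - a)) by lia.
    by rewrite stair_split addKn.
  exists a.-1, r'.+1, [::]; split.
    apply/and5P; split => //; move: nE; rewrite negb_or => /andP [/eqP ? /eqP ?]; lia.
  right; rewrite /D cats0; f_equal; lia.
have Hne : (head 0 (rcons rest' s')).+1 != a by case: H => // /(congr1 size); rewrite size_rcons.
have hmem : head 0 (rcons rest' s') \in rcons rest' s'.
  by clear; case: rest' => [|x l] /=; rewrite ?mem_head ?in_cons ?eqxx.
move: (all_le_head pr) => /allP /(_ s'); rewrite mem_rcons mem_head => /(_ isT) hs.
move: (ar) => /allP /(_ _ hmem) ha.
set h := head 0 (rcons rest' s') in Hne hs ha.
have s2a : s'.+2 <= a by move: Hne => /eqP; lia.
move: (pr); rewrite pairwise_rcons => /andP [ars pr'].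
move: (ar); rewrite all_rcons => /andP [_ ar'].
move: (al); rewrite all_rcons => /andP [s3 _].
case: (leqP s' r) => sr.
  exists (a + (r - s')), s', (stair a (r - s') ++ rest'); split.
    apply/and5P; split => //.
    - lia.
    - exact: pw_stair_cat'.
    - rewrite all_cat; apply/andP; split; first by apply: all_stair => k _ /=; lia.
      by apply: sub_all ars => y.
    - rewrite all_cat; apply/andP; split; first by apply: all_stair => k kr /=; lia.
      by apply: sub_all ar' => y /=; lia.
  left; rewrite /U {1}(_ : r = s' + (r - s')); last lia.
  by rewrite stair_cat -cats1 -!catA.
exists a.-1, r, (rcons rest' s'); split.
  apply/and5P; split => //.
  - lia.
  - rewrite all_rcons sr /=; apply: sub_all ars => y hy; exact: ltn_trans sr hy.
  - apply: sub_all (all_le_head pr) => y /= hy; rewrite -/h in hy; lia.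
have a0 : 0 < a by lia.
by right; rewrite /D prednK.
Qed.

Lemma classifyE l : Good l -> isE l -> exists r, 3 <= r /\ (l = stair r r \/ l = stair r.+1 r).
Proof.
case/and3P => pl al rl iE.
have l0 : l != [::] by case: l rl {pl al iE}.
have [a [rest [E H]]] := run_decomp l0.
move: E H rl; set r := run l => E H rl.
have r0 : 0 < r by lia.
have hr : run (stair a r ++ rest) = r by apply: run_stair_eq.
rewrite E in iE *; clearbody r; clear E l0 l pl al.
rewrite /isE hr size_cat size_stair in iE.
case/andP: iE => /eqP e b; have E : rest = [::] by apply/nilP; rewrite /nilp; lia.
subst rest; rewrite cats0 in b; exists r; split => //; move: b.
case: r r0 {rl hr e H} => // r _; rewrite last_stair.
by rewrite cats0; case/orP => /eqP ->; [left|right].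
Qed.

Lemma mem_le_sumn (x : nat) l : x \in l -> x <= sumn l.
Proof. elim: l => //= y l IH; rewrite in_cons => /orP [/eqP ->|/IH]; lia. Qed.

Lemma geq_trans' : transitive geq.
Proof. move=> y x z /= h1 h2; exact: leq_trans h2 h1. Qed.

Lemma mem_X n s : (s \in butterflies n) = butterfly n s.
Proof.
rewrite /butterflies /distinct_partitions mem_filter.
apply/andP/idP => [[] //|B]; split => //.
rewrite mem_filter; have B' := B; case/and5P: B' => dp _ _ _ _; rewrite dp /=.
case/andP: dp => /andP [so po] /eqP sn.
apply/mapP; exists [set i : 'I_n.+1 | val i \in s]; first by rewrite mem_enum.
rewrite -{1}(sorted_sort geq_trans' (_ : sorted geq s)); last first.
  by move: so; rewrite gtn_sorted_uniq_geq => /andP [_].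
apply/esym/perm_sortP.
- by move=> x y; exact: leq_total.
- exact: geq_trans'.
- by move=> x y /= /andP [h1 h2]; apply/eqP; rewrite eqn_leq h1 h2.
apply: uniq_perm.
- rewrite map_inj_uniq ?enum_uniq //; exact: val_inj.
- by move: so; rewrite gtn_sorted_uniq_geq => /andP [].
move=> x; apply/mapP/idP => [[i]|xs].
  by rewrite mem_enum inE => ? ->.
have xn : x < n.+1 by rewrite ltnS -sn; exact: mem_le_sumn.
by exists (Ordinal xn); rewrite // mem_enum inE.
Qed.

Lemma uniq_X n : uniq (butterflies n).
Proof.
rewrite /butterflies /distinct_partitions; apply: filter_uniq; apply: filter_uniq.
rewrite map_inj_uniq; first exact: enum_uniq.
move=> A B E; apply/setP => i.
have: (val i \in sort geq [seq val i | i <- enum A]) = (val i \in sort geq [seq val i | i <- enum B]) by rewrite E.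
rewrite !mem_sort !(mem_map val_inj) !mem_enum.
by [].
Qed.

Definition lp (s : seq nat) := filter (leq 3) s.
Definition tp (s : seq nat) := filter (pred1 2) s.
Definition g (s : seq nat) := F (lp s) ++ tp s.
Definition Ev (s : seq nat) := ~~ odd (nth 0 s 1).
Definition Ex (s : seq nat) := isE (lp s).

Lemma all_ge_last (l : seq nat) : pairwise gtn l -> all (fun x => last 0 l <= x) l.
Proof.
elim: l => // x t IH; rewrite pairwise_cons => /andP [ax pt].
case: t IH ax pt => [|y t] IH ax pt; first by rewrite /= leqnn.
have := IH pt; rewrite [last 0 _]/= => /= /andP [hy ht].
by rewrite [last _ _]/= hy ht andbT; move: ax => /= /andP [xy _]; lia.
Qed.

Lemma split2 (l : seq nat) : pairwise gtn l -> all (leq 2) l ->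
  l = lp l ++ tp l /\ (tp l = [::] \/ tp l = [:: 2]).
Proof.
elim: l => [|x t IH]; first by split => //; left.
rewrite pairwise_cons /= => /andP [ax pt] /andP [x2 a2].
have [E H] := IH pt a2.
case: (ltngtP x 2) x2 => // [x3|x2] _.
  by rewrite cat_cons -E; split.
subst x; have -> : t = [::] by case: t {IH pt E H} ax a2 => //= y t /andP [y2 _] /andP [y2' _]; lia.
by split => //; right.
Qed.

Lemma run_le_size l : run l <= size l.
Proof. elim: l => // x [|y t] IH //; rewrite run_cons2; case: eqP => // _; move: IH => /=; lia. Qed.

Lemma run3 l : 3 <= run l -> exists x t, l = [:: x.+2, x.+1, x & t].
Proof.
move=> h; have := run_le_size l.
case: l h => [|a [|b [|c t]]] h sz; move: (leq_trans h sz) => // _.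
move: h; rewrite run_cons2; case: eqP => // -> ; rewrite run_cons2; case: eqP => // -> _.
by exists c, t.
Qed.

Lemma lp_cat l t : all (leq 3) l -> (t = [::] \/ t = [:: 2]) -> lp (l ++ t) = l /\ tp (l ++ t) = t.
Proof.
move=> al ht; rewrite /lp /tp !filter_cat (all_filterP al).
have -> : filter (pred1 2) l = [::].
  clear ht; elim: l al => // x l IH /andP [x3 al] /=.
  rewrite IH // (_ : (x == 2) = false) //; apply/negbTE; apply/eqP; lia.
by case: ht => ->; split; rewrite /= ?cats0.
Qed.

Lemma last_in (l : seq nat) : l != [::] -> last 0 l \in l.
Proof. case: l => // y l _; exact: mem_last. Qed.

Lemma bf_of_Good l t : Good l -> (t = [::] \/ t = [:: 2]) -> butterfly (sumn (l ++ t)) (l ++ t).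
Proof.
case/and3P => pl al rl ht.
have [x [t' E]] := run3 rl.
apply/and5P; split.
- rewrite /distinct_partition eqxx andbT sorted_pairwise; last exact: gtn_trans.
  rewrite pairwise_cat pl /=; apply/andP; split.
    case: ht => ->; rewrite ?allrel0r ?allrel1r //= andbT; apply: sub_all al => y /=; lia.
  rewrite all_cat; apply/andP; split; first by apply: sub_all al => y /=; lia.
    by case: ht => ->.
- by rewrite E.
- by rewrite E.
- by rewrite E.
- rewrite last_cat; case: ht => ->; last by [].
  have : last 0 l \in l by rewrite E; apply: last_in.
  by move/(allP al) => /=; lia.
Qed.

Lemma lp_cons x t : 3 <= x -> lp (x :: t) = x :: lp t.
Proof. by move=> h; rewrite /lp /= h. Qed.

Lemma bf_decomp n s : butterfly n s ->
  [/\ s = lp s ++ tp s, (tp s = [::] \/ tp s = [:: 2]),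
      (Good (lp s) \/ (lp s = [:: 4; 3] /\ tp s = [:: 2])) & sumn s = n].
Proof.
case/and5P => /andP [/andP [so _] /eqP sn] sz h01 h02 hl.
rewrite sorted_pairwise in so; last exact: gtn_trans.
have a2 : all (leq 2) s by apply: sub_all (all_ge_last so) => y /=; lia.
have [E H] := split2 so a2.
split => //.
clear E H hl sn.
case: s sz h01 h02 so a2 => [|a [|b [|c t]]] // _ /eqP h01 /eqP h02 so a2.
rewrite /= in h01 h02; have eb : b = c.+1 by lia.
subst b; subst a.
have c2 : 2 <= c by move: a2 => /allP /(_ c); rewrite !inE eqxx !orbT => /(_ isT).
case: (ltngtP c 2) c2 => // [c3|c2] _.
  have E : lp [:: c.+2, c.+1, c & t] = [:: c.+2, c.+1, c & lp t].
    by rewrite lp_cons; last lia; rewrite lp_cons; last lia; rewrite lp_cons.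
  left; apply/and3P; split.
  - exact: pairwise_filter.
  - exact: filter_all.
  - rewrite E !run_cons2 !eqxx; have := run_cons c (lp t); lia.
subst c.
have -> : t = [::].
  move: so a2; rewrite !pairwise_cons => /and4P [_ _ ht _].
  case: t ht => // y t /andP [hy _] /allP /(_ y); rewrite !inE eqxx !orbT => /(_ isT).
  move: hy => /=; lia.
by right.
Qed.

Lemma Ev_stair a r rest : Ev (stair a r.+2 ++ rest) = ~~ odd (a + r).
Proof. by rewrite /Ev nth1_stair. Qed.

Lemma pair_UD c s m t : cond c s m -> (t = [::] \/ t = [:: 2]) ->
  [/\ g (U c s m ++ t) = D c s m ++ t, g (D c s m ++ t) = U c s m ++ t,
      ~~ Ex (U c s m ++ t), ~~ Ex (D c s m ++ t)
      & sumn (U c s m ++ t) = sumn (D c s m ++ t) /\ Ev (D c s m ++ t) = ~~ Ev (U c s m ++ t)].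
Proof.
move=> C ht.
have [pU _] := lp_cat (proj1 (andP (proj2 (andP (Good_U C))))) ht.
have [pD _] := lp_cat (proj1 (andP (proj2 (andP (Good_D C))))) ht.
have [_ tU] := lp_cat (proj1 (andP (proj2 (andP (Good_U C))))) ht.
have [_ tD] := lp_cat (proj1 (andP (proj2 (andP (Good_D C))))) ht.
rewrite /g /Ex pU pD tU tD F_U // F_D //; split => //.
- exact: notE_U.
- exact: notE_D.
split; first by rewrite (sumn_cat (U c s m)) (sumn_cat (D c s m)) sum_U.
move: C => /and5P [s3 _ _ _ _].
clear pU pD tU tD.
case: s s3 => [|[|[|s]]] // _.
Qed.

Lemma g_props n x : butterfly n x -> ~~ Ex x ->
  [/\ butterfly n (g x), ~~ Ex (g x), g (g x) = x & Ev (g x) = ~~ Ev x].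
Proof.
move=> B nE; have [E H G sn] := bf_decomp B.
case: G => [G|[G1 G2]]; last by move: nE; rewrite /Ex G1.
have [c [s [m [C Hl]]]] := classify G nE.
move: E H sn; set t := tp x => E H sn.
clearbody t.
have [g1 g2 n1 n2 [s12 e12]] := pair_UD C H.
case: Hl => Hl; rewrite Hl in E; subst x.
- rewrite g1 g2 n2 e12 negbK; split => //.
  rewrite -sn s12; apply: bf_of_Good => //; exact: Good_D.
- rewrite g2 g1 n1 e12 negbK; split => //.
  rewrite -sn -s12; apply: bf_of_Good => //; exact: Good_U.
Qed.

Lemma count_main n :
  count (predI Ev (predC Ex)) (butterflies n) = count (predI (predC Ev) (predC Ex)) (butterflies n).
Proof.
rewrite -!count_filter; set Y := filter _ _.
have hY x : x \in Y -> butterfly n x /\ ~~ Ex x by rewrite mem_filter mem_X => /andP [].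
have uY : uniq Y by apply: filter_uniq; exact: uniq_X.
have pY : perm_eq Y (map g Y).
  apply: uniq_perm => //.
    rewrite map_inj_in_uniq // => x y /hY [Bx nx] /hY [By ny] e.
    by have [_ _ <- _] := g_props Bx nx; have [_ _ <- _] := g_props By ny; rewrite e.
  move=> x; apply/idP/mapP => [xY|[y yY ->]].
    have [Bx nx] := hY x xY; have [B1 n1 gg _] := g_props Bx nx.
    by exists (g x); [rewrite mem_filter /= n1 mem_X B1 | rewrite gg].
  have [By ny] := hY y yY; have [B1 n1 _ _] := g_props By ny.
  by rewrite mem_filter /= n1 mem_X B1.
rewrite (permP pY Ev) count_map; apply: eq_in_count => x /hY [Bx nx].
by have [_ _ _ E] := g_props Bx nx; rewrite /preim /= E.
Qed.

Lemma count_split (T : Type) (a b : pred T) s :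
  count a s = count (predI a (predC b)) s + count (predI a b) s.
Proof. elim: s => //= x s ->; case: (a x); case: (b x) => /=; lia. Qed.

Lemma count0 (T : eqType) (p : pred T) s : (forall x, x \in s -> p x -> False) -> count p s = 0.
Proof.
move=> H; rewrite -(count_pred0 s); apply: eq_in_count => x xs /=.
by apply/negbTE/negP => /(H x xs).
Qed.

Lemma count1 (T : eqType) (p : pred T) s x0 : uniq s -> x0 \in s -> p x0 ->
  (forall x, x \in s -> p x -> x = x0) -> count p s = 1.
Proof.
move=> us xs px H; transitivity (count_mem x0 s); last by rewrite count_uniq_mem // xs.
apply: eq_in_count => x xin /=; apply/idP/eqP => [/(H x xin) //|->]; exact: px.
Qed.
Lemma even_tt t : t * t + t = 2 * ((t * t + t) %/ 2).
Proof.
rewrite -[in LHS](odd_double_half (t * t + t)) oddD oddM andbb addbb add0n.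
by rewrite divn2 -muln2 mulnC.
Qed.
Lemma P1E t : 2 * P1 t = 3 * t * t + t + 4.
Proof. rewrite /P1; have := even_tt t; rewrite expnS expn1; lia. Qed.
Lemma P2E t : 2 * P2 t + t.+1 = 3 * t.+1 * t.+1.
Proof. rewrite /P2; have := even_tt t; rewrite expnS expn1 addn1; lia. Qed.
Lemma P3E t : 2 * P3 t + t.+1 = 3 * t.+1 * t.+1 + 4.
Proof. rewrite /P3; have := even_tt t; rewrite expnS expn1 addn1; lia. Qed.
Lemma P4E t : 2 * P4 t = 3 * t.+1 * t.+1 + t.+1.
Proof. rewrite /P4; have := even_tt t; rewrite expnS expn1 addn1; lia. Qed.
Lemma A1 n r f u h : 3 <= r -> f <= 1 -> 2 * n + r = 3 * r * r + 4 * f ->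
  2 <= u -> h <= 1 -> 2 * n = 3 * u * u + u + 4 * h -> False.
Proof.
move=> r3 f1 e1 u2 h1 e2; case: (leqP r u) => ru.
  have : r * r <= u * u by apply: leq_mul. nia.
have : u.+1 * u.+1 <= r * r by apply: leq_mul. nia.
Qed.
Lemma A2 n r f r' f' : 3 <= r -> f <= 1 -> 2 * n + r = 3 * r * r + 4 * f ->
  3 <= r' -> f' <= 1 -> 2 * n + r' = 3 * r' * r' + 4 * f' -> r = r' /\ f = f'.
Proof.
move=> r3 f1 e1 u2 h1 e2; case: (ltngtP r r') => ru.
- have : r.+1 * r.+1 <= r' * r' by apply: leq_mul. nia.
- have : r'.+1 * r'.+1 <= r * r by apply: leq_mul. nia.
- subst; split => //; lia.
Qed.
Lemma A3 n r f r' f' : 2 <= r -> f <= 1 -> 2 * n = 3 * r * r + r + 4 * f ->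
  2 <= r' -> f' <= 1 -> 2 * n = 3 * r' * r' + r' + 4 * f' -> r = r' /\ f = f'.
Proof.
move=> r3 f1 e1 u2 h1 e2; case: (ltngtP r r') => ru.
- have : r.+1 * r.+1 <= r' * r' by apply: leq_mul. nia.
- have : r'.+1 * r'.+1 <= r * r by apply: leq_mul. nia.
- subst; split => //; lia.
Qed.

Lemma Good_stair a r : 3 <= a -> 3 <= r -> Good (stair a r).
Proof.
move=> a3 r3; apply/and3P; split; first exact: pw_stair.
  by apply: all_stair => k _ /=; lia.
by rewrite -[stair a r]cats0 run_stair_eq //; [lia | left].
Qed.

Lemma nseq_cases f : f <= 1 -> nseq f 2 = [::] \/ nseq f 2 = [:: 2].
Proof. by case: f => [|[|]] //= _; [left|right]. Qed.

Lemma sumn_nseq2 f : f <= 1 -> sumn (nseq f 2) = 2 * f.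
Proof. by case: f => [|[|]]. Qed.

Lemma exc_in a r f : 3 <= a -> 3 <= r -> f <= 1 -> (a = r \/ a = r.+1) ->
  butterfly (sumn (stair a r ++ nseq f 2)) (stair a r ++ nseq f 2) /\ Ex (stair a r ++ nseq f 2).
Proof.
move=> a3 r3 f1 ar; have G := Good_stair a3 r3; split.
  by apply: bf_of_Good => //; exact: nseq_cases.
rewrite /Ex; have [-> _] := lp_cat (proj1 (andP (proj2 (andP G)))) (nseq_cases f1).
rewrite /isE -[stair a r]cats0 run_stair_eq; [|lia|by left].
rewrite cats0 size_stair eqxx /=; case: r r3 ar {G} => // r _ ar; rewrite last_stair.
by case: ar => ->; rewrite eqxx ?orbT.
Qed.

Lemma sum_exc a r f : f <= 1 -> 2 * sumn (stair a r ++ nseq f 2) + r = r * (2 * a + r) + 4 * f.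
Proof. move=> f1; rewrite sumn_cat sumn_nseq2 //; have := sumn_stair a r; lia. Qed.

Lemma exc n x : butterfly n x -> Ex x -> exists r f, f <= 1 /\
  ((3 <= r /\ x = stair r r ++ nseq f 2 /\ Ev x /\ 2 * n + r = 3 * r * r + 4 * f) \/
   (2 <= r /\ (r = 2 -> f = 1) /\ x = stair r.+1 r ++ nseq f 2 /\ ~~ Ev x /\
    2 * n = 3 * r * r + r + 4 * f)).
Proof.
move=> B iE; have [E H G sn] := bf_decomp B.
have [f [f1 Ht]] : exists f, f <= 1 /\ tp x = nseq f 2.
  by case: H => ->; [exists 0 | exists 1].
case: G => [G|[G1 G2]].
  have [r [r3 Hl]] := classifyE G iE.
  exists r, f; split => //.
  case: Hl => Hl; rewrite Hl Ht in E; subst x; [left|right].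
  - have := sum_exc r r f1; rewrite sn; clear -r3 f1; case: r r3 => [|[|r]] // r3 H.
    have ev : Ev (stair r.+2 r.+2 ++ nseq f 2) by rewrite Ev_stair !addSn /= negbK oddD addbb.
    by do !split => //; lia.
  - have := sum_exc r.+1 r f1; rewrite sn; clear -r3 f1; case: r r3 => [|[|r]] // r3 H.
    have ev : ~~ Ev (stair r.+3 r.+2 ++ nseq f 2) by rewrite Ev_stair !addSn /= negbK oddD addbb.
    by do !split => //; lia.
exists 2, 1; split => //; right.
have ex : x = [:: 4; 3; 2] by rewrite E G1 G2.
rewrite ex in sn; subst n x; by do !split.
Qed.

Lemma e_zero n : (forall r f, 3 <= r -> f <= 1 -> 2 * n + r = 3 * r * r + 4 * f -> False) ->
  count (predI Ev Ex) (butterflies n) = 0.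
Proof.
move=> H; apply: count0 => x; rewrite mem_X => B /andP [ev ex].
have [r [f [f1 [[r3 [_ [_ e]]]|[_ [_ [_ [nev _]]]]]]]] := exc B ex.
  exact: H r f r3 f1 e.
by rewrite ev in nev.
Qed.

Lemma o_zero n : (forall r f, 2 <= r -> f <= 1 -> (r = 2 -> f = 1) -> 2 * n = 3 * r * r + r + 4 * f -> False) ->
  count (predI (predC Ev) Ex) (butterflies n) = 0.
Proof.
move=> H; apply: count0 => x; rewrite mem_X => B /andP [nev ex].
have [r [f [f1 [[_ [_ [ev _]]]|[r2 [r2f [_ [_ e]]]]]]]] := exc B ex.
  by rewrite /= ev in nev.
exact: H r f r2 f1 r2f e.
Qed.

Lemma e_one n r f : 3 <= r -> f <= 1 -> 2 * n + r = 3 * r * r + 4 * f ->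
  count (predI Ev Ex) (butterflies n) = 1.
Proof.
move=> r3 f1 e.
have [B Ex0] := exc_in r3 r3 f1 (or_introl erefl).
have sn : sumn (stair r r ++ nseq f 2) = n by have := sum_exc r r f1; lia.
rewrite sn in B.
apply: (count1 (x0 := stair r r ++ nseq f 2)); first exact: uniq_X.
- by rewrite mem_X.
- rewrite /= Ex0 andbT; case: r r3 {B Ex0 sn e} => [|[|r]] // _.
  by rewrite Ev_stair !addSn /= negbK oddD addbb.
move=> x; rewrite mem_X => Bx /andP [ev ex].
have [r' [f' [f1' [[r3' [-> [_ e']]]|[_ [_ [_ [nev _]]]]]]]] := exc Bx ex.
  by have [-> ->] := A2 r3' f1' e' r3 f1 e.
by rewrite ev in nev.
Qed.

Lemma o_one n r f : 2 <= r -> f <= 1 -> (r = 2 -> f = 1) -> 2 * n = 3 * r * r + r + 4 * f ->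
  count (predI (predC Ev) Ex) (butterflies n) = 1.
Proof.
move=> r2 f1 rf e.
have [B Ex0] : butterfly n (stair r.+1 r ++ nseq f 2) /\ Ex (stair r.+1 r ++ nseq f 2).
  case: (ltngtP r 2) => [r1|r3|r2']; first lia.
    have h3 : 3 <= r.+1 by lia.
    have [B Ex0] := exc_in h3 r3 f1 (or_intror erefl).
    have sn : sumn (stair r.+1 r ++ nseq f 2) = n by have := sum_exc r.+1 r f1; lia.
    by rewrite sn in B.
  subst r; have f1' := rf erefl; subst f.
  have -> : n = 9 by lia.
  by [].
apply: (count1 (x0 := stair r.+1 r ++ nseq f 2)); first exact: uniq_X.
- by rewrite mem_X.
- rewrite /= Ex0 andbT; case: r r2 {B Ex0 e rf} => [|[|r]] // _.
  by rewrite Ev_stair !addSn /= negbK oddD addbb.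
move=> x; rewrite mem_X => Bx /andP [nev ex].
have [r' [f' [f1' [[_ [_ [ev _]]]|[r2' [_ [-> [_ e']]]]]]]] := exc Bx ex.
  by rewrite /= ev in nev.
by have [-> ->] := A3 r2' f1' e' r2 f1 e.
Qed.

Unset Implicit Arguments.

Theorem theorem4p6 (n : nat) (hn : 6 <= n) :
  [/\ (forall t : nat, 2 <= t ->
         [/\ n <> P1 t, n <> P2 t, n <> P3 t & n <> P4 t]) ->
        s_e n = s_o n,
      (exists2 t : nat, 2 <= t & n = P1 t \/ n = P4 t) -> s_e n + 1 = s_o n
    & (exists2 t : nat, 2 <= t & n = P2 t \/ n = P3 t) -> s_e n = s_o n + 1].
Proof.
have se : s_e n = count (predI Ev (predC Ex)) (butterflies n) + count (predI Ev Ex) (butterflies n).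
  exact: count_split.
have so : s_o n = count (predI Ev (predC Ex)) (butterflies n) + count (predI (predC Ev) Ex) (butterflies n).
  rewrite count_main -count_split; apply: eq_count => s; by rewrite /= /Ev negbK.
rewrite se so; split.
- move=> HP; rewrite e_zero ?o_zero //.
    move=> r f r2 f1 rf e; case: f f1 rf e => [|[|]] // _ rf e.
      have r3 : 3 <= r by case: (ltngtP r 2) => [?|//|r2']; [lia | move: (rf r2')].
      have t2 : 2 <= r.-1 by lia.
      have [_ _ _ Hc] := HP r.-1 t2.
      apply: Hc; have := P4E r.-1; rewrite prednK; lia.
    have [Hc _ _ _] := HP r r2; apply: Hc; have := P1E r; lia.
  move=> r f r3 f1 e; case: f f1 e => [|[|]] // _ e.
    have t2 : 2 <= r.-1 by lia.
    have [_ Hc _ _] := HP r.-1 t2.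
    apply: Hc; have := P2E r.-1; rewrite prednK; lia.
  have t2 : 2 <= r.-1 by lia.
  have [_ _ Hc _] := HP r.-1 t2.
  apply: Hc; have := P3E r.-1; rewrite prednK; lia.
- case=> t t2 Hn.
  have [u [h [u2 h1 uh e]]] : exists u h, [/\ 2 <= u, h <= 1, (u = 2 -> h = 1) & 2 * n = 3 * u * u + u + 4 * h].
    case: Hn => En.
      by exists t, 1; split; [exact: t2 | done | done | rewrite En P1E].
    exists t.+1, 0; split; [lia | done | move=> ?; lia | have := P4E t; lia].
  rewrite e_zero ?(o_one u2 h1 uh e) ?addn0 //.
  move=> r f r3 f1 e'; exact: A1 r3 f1 e' u2 h1 e.
- case=> t t2 Hn.
  have [u [h [u3 h1 e]]] : exists u h, [/\ 3 <= u, h <= 1 & 2 * n + u = 3 * u * u + 4 * h].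
    case: Hn => En.
      exists t.+1, 0; split; [lia | done | have := P2E t; lia].
    exists t.+1, 1; split; [lia | done | have := P3E t; lia].
  rewrite o_zero ?(e_one u3 h1 e) ?addn0 //.
  move=> r f r2 f1 _ e'; exact: A1 u3 h1 e r2 f1 e'.
Qed.
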